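(* Let $n\ge 3$ and let $C=(c_1,\dots,c_k)$, $k\ge 3$, be a circuit of the complete graph $K_n$. Define \[L_C=\sum_{1\le i<j\le k}(-1)^{i+j}\,(x_{t(c_i)}-x_{s(c_i)})\,\omega_{C\setminus\{c_i,c_j\}},\qquad L'_C=\sum_{1\le i<j\le k}(-1)^{i+j}\,(y_{t(c_i)}-y_{s(c_i)})\,\omega_{C\setminus\{c_i,c_j\}}\] in $E_2^{1,k-2}$. Then $d_2(L_C)=0$ and $d_2(L'_C)=0$, i.e. $L_C,L'_C\in\ker d_2^{1,k-2}$.
   Context: Let $E$ be a complex elliptic curve, $x,y$ a basis of $H^1(E;\mathbb{Q})$ with $xy$ generating $H^2(E;\mathbb{Q})$. Let $C(n)=\{(P_1,\dots,P_n)\in E^n\mid P_i\neq P_j \text{ for } i\neq j\}$ be the complement of the braid elliptic arrangement. Let $E_2=E_2^{\bullet,\bullet}$ be the second page (with differential $d_2$) of the Leray spectral sequence, with rational coefficients, of the inclusion $C(n)\hookrightarrow E^n$. It is the bigraded differential algebra given as the quotient of the free graded-commutative algebra (graded commutative with respect to total degree $p+q$) over $\mathbb{Q}$ on generators $x_i,y_i$ ($1\le i\le n$) of bidegree $(1,0)$ and $\omega_{ij}=\omega_{ji}$ ($1\le i\neq j\le n$) of bidegree $(0,1)$ by the relations $(x_i-x_j)\omega_{ij}=0$, $(y_i-y_j)\omega_{ij}=0$, and $\omega_{ij}\omega_{jk}+\omega_{jk}\omega_{ki}+\omega_{ki}\omega_{ij}=0$ for distinct $i,j,k$; here $x_i,y_i$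 are the pullbacks of $x,y$ along the $i$-th projection $E^n\to E$. The differential $d_2$ has bidegree $(2,-1)$, is a derivation for the total degree (graded Leibniz rule), vanishes on $x_i,y_i$, and $d_2\omega_{ij}=(x_i-x_j)(y_i-y_j)$. A circuit of length $k\ge3$ in $K_n$ is a sequence $C=(c_1,\dots,c_k)$ of oriented edges, with source $s(c)$ and target $t(c)$, such that $t(c_i)=s(c_{i+1})$ for $i<k$, $t(c_k)=s(c_1)$ and the $s(c_i)$ are pairwise distinct. For an oriented edge $c$ put $\omega_c=\omega_{s(c),t(c)}$, and for a subsequence $C\setminus\{c_i,c_j\}$ let $\omega_{C\setminus\{c_i,c_j\}}$ be the product of the $\omega_{c_m}$, $m\notin\{i,j\}$, in increasing order of $m$. *)

(* Defs.v *)
From HB Require Import structures.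
From mathcomp Require Import all_boot all_order all_algebra.
Set Implicit Arguments. Unset Strict Implicit. Unset Printing Implicit Defensive.
Import Order.TTheory GRing.Theory Num.Theory.
Local Open Scope ring_scope.

(* Generators of the free graded-commutative algebra, for fixed n:
   inl (inl i) = x_i, inl (inr i) = y_i, inr p = omega_{p.1 p.2} with p.1 < p.2
   (one generator per unordered pair {i,j}, since omega_ij = omega_ji). *)
Definition Wpair (n : nat) := {p : 'I_n * 'I_n | (p.1 < p.2)%N}.
Definition Gen (n : nat) : finType := (('I_n + 'I_n) + Wpair n)%type.

(* All generators have total degree 1 (odd), so the free graded-commutative
   Q-algebra on them is the exterior algebra over Q.  An element is a rational
   function on the finite subsets (monomials) of generators; the monomial e_S
   is the wedge of the elements of S in increasing order of enum_rank. *)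
Notation Lam n := {ffun {set Gen n} -> rat}.

Definition basis_el n (S : {set Gen n}) : Lam n := [ffun U => (U == S)%:R].
Definition one n : Lam n := basis_el set0.
Definition sc n (r : rat) (v : Lam n) : Lam n := [ffun U => r * v U].
Definition gen n (g : Gen n) : Lam n := basis_el [set g].

(* sign of e_S /\ e_T = sgn S T e_(S u T) for disjoint S, T *)
Definition sgn n (S T : {set Gen n}) : rat :=
  (-1) ^+ #|[set p in setX S T | (enum_rank p.2 < enum_rank p.1)%N]|.

Definition lmul n (a b : Lam n) : Lam n :=
  [ffun U => \sum_(S : {set Gen n}) \sum_(T : {set Gen n} |
       (S :&: T == set0) && (S :|: T == U)) sgn S T * a S * b T].

Definition X n (i : 'I_n) : Lam n := gen (inl (inl i)).
Definition Y n (i : 'I_n) : Lam n := gen (inl (inr i)).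
(* omega_{ij} = omega_{ji}; (the value for i = j is never used) *)
Definition W n (i j : 'I_n) : Lam n :=
  oapp (fun q : Wpair n => gen (inr q)) 0
       (insub (if (i < j)%N then (i, j) else (j, i))).

Definition is_rel n (r : Lam n) : Prop :=
  (exists i j : 'I_n, i != j /\ r = lmul (X i - X j) (W i j)) \/
  (exists i j : 'I_n, i != j /\ r = lmul (Y i - Y j) (W i j)) \/
  (exists i j k : 'I_n, [/\ i != j, j != k & i != k] /\
     r = lmul (W i j) (W j k) + lmul (W j k) (W k i) + lmul (W k i) (W i j)).

Definition in_rel_ideal n (v : Lam n) : Prop :=
  exists (m : nat) (a r b : 'I_m -> Lam n),
    (forall l, is_rel (r l)) /\ v = \sum_(l < m) lmul (lmul (a l) (r l)) (b l).

Definition dgen n (g : Gen n) : Lam n :=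
  match g with
  | inl _ => 0
  | inr q => lmul (X (val q).1 - X (val q).2) (Y (val q).1 - Y (val q).2)
  end.

(* the unique derivation (graded Leibniz rule for the total degree) extending
   dgen: since every d(g) has even degree 2,
   d(g_1 ... g_m) = sum_l (-1)^(l-1) d(g_l) g_1 .. ^g_l .. g_m. *)
Definition dbasis n (S : {set Gen n}) : Lam n :=
  \sum_(g in S) sc ((-1) ^+ #|[set h in S | (enum_rank h < enum_rank g)%N]|)
                (lmul (dgen g) (basis_el (S :\ g))).

Definition d2 n (v : Lam n) : Lam n := \sum_(S : {set Gen n}) sc (v S) (dbasis S).

(* A circuit of length k in K_n: oriented edges c_m = (s(c_m), t(c_m)) with
   s <> t, t(c_m) = s(c_{m+1}) cyclically, sources pairwise distinct.
   Indices are 0-based: c_0, ..., c_{k-1}. *)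
Definition is_circuit n k (c : 'I_k -> 'I_n * 'I_n) : Prop :=
  [/\ (3 <= k)%N,
      forall m, (c m).1 != (c m).2,
      forall m, (c m).2 = (c (ordS m)).1 &
      injective (fun m => (c m).1)].

Definition omega_edge n (e : 'I_n * 'I_n) : Lam n := W e.1 e.2.

(* omega_{C \ {c_i, c_j}}: product in increasing order of the remaining indices *)
Definition omega_minus n k (c : 'I_k -> 'I_n * 'I_n) (i j : 'I_k) : Lam n :=
  \big[@lmul n/one n]_(m < k | (m != i) && (m != j)) omega_edge (c m).

(* (shifting indices by one does not change the parity of i + j) *)
Definition L_C n k (c : 'I_k -> 'I_n * 'I_n) : Lam n :=
  \sum_(i < k) \sum_(j < k | (i < j)%N) sc ((-1) ^+ (i + j))
     (lmul (X (c i).2 - X (c i).1) (omega_minus c i j)).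

Definition L'_C n k (c : 'I_k -> 'I_n * 'I_n) : Lam n :=
  \sum_(i < k) \sum_(j < k | (i < j)%N) sc ((-1) ^+ (i + j))
     (lmul (Y (c i).2 - Y (c i).1) (omega_minus c i j)).

(* Main.v *)
Require Import Defs.
From HB Require Import structures.
From mathcomp Require Import all_boot all_order all_algebra.
From mathcomp Require Import ring zify.
Set Implicit Arguments. Unset Strict Implicit. Unset Printing Implicit Defensive.
Import Order.TTheory GRing.Theory Num.Theory.
Local Open Scope ring_scope.

Section Ext.
Variable n : nat.
Local Notation L := (Lam n).
Local Notation G := (Gen n).
Implicit Types (a b c : L) (S T U : {set G}).

Lemma addfE (a b : L) U : (a + b) U = a U + b U.
Proof. by rewrite /= ffunE. Qed.
Lemma oppfE (a : L) U : (- a) U = - a U.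
Proof. by rewrite /= ffunE. Qed.
Lemma zerofE U : (0 : L) U = 0.
Proof. by rewrite /= ffunE. Qed.
Lemma subfE (a b : L) U : (a - b) U = a U - b U.
Proof. by rewrite addfE oppfE. Qed.
Lemma scE r (a : L) U : sc r a U = r * a U.
Proof. by rewrite ffunE. Qed.
Lemma basisE (S : {set G}) U : basis_el S U = (U == S)%:R.
Proof. by rewrite ffunE. Qed.

Lemma lmulE (a b : L) U : lmul a b U = \sum_S \sum_T
  (if (S :&: T == set0) && (S :|: T == U) then sgn S T * a S * b T else 0).
Proof. by rewrite ffunE; apply: eq_bigr => S _; rewrite big_mkcond. Qed.

Lemma lmulDl a b c : lmul (a + b) c = lmul a c + lmul b c.
Proof.
apply/ffunP => U; rewrite addfE !lmulE -big_split /=; apply: eq_bigr => S _.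
rewrite -big_split /=; apply: eq_bigr => T _; case: ifP => _; last by rewrite addr0.
idtac.
by rewrite addfE mulrDr mulrDl.
Qed.
Lemma lmulDr a b c : lmul a (b + c) = lmul a b + lmul a c.
Proof.
apply/ffunP => U; rewrite addfE !lmulE -big_split /=; apply: eq_bigr => S _.
rewrite -big_split /=; apply: eq_bigr => T _; case: ifP => _; last by rewrite addr0.
by rewrite addfE mulrDr.
Qed.
Lemma lmulscl r a b : lmul (sc r a) b = sc r (lmul a b).
Proof.
apply/ffunP => U; rewrite scE !lmulE mulr_sumr; apply: eq_bigr => S _.
rewrite mulr_sumr; apply: eq_bigr => T _; case: ifP => _; last by rewrite mulr0.
by rewrite scE; ring.
Qed.
Lemma lmulscr r a b : lmul a (sc r b) = sc r (lmul a b).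
Proof.
apply/ffunP => U; rewrite scE !lmulE mulr_sumr; apply: eq_bigr => S _.
rewrite mulr_sumr; apply: eq_bigr => T _; case: ifP => _; last by rewrite mulr0.
by rewrite scE; ring.
Qed.
Lemma sc_opp (a : L) : sc (-1) a = - a.
Proof. by apply/ffunP => U; rewrite scE oppfE mulN1r. Qed.
Lemma lmul0l a : lmul 0 a = 0.
Proof. by apply/ffunP => U; rewrite zerofE lmulE big1 // => S _; rewrite big1 // => T _; rewrite zerofE; case: ifP => // _; rewrite mulr0 mul0r. Qed.
Lemma lmul0r a : lmul a 0 = 0.
Proof. by apply/ffunP => U; rewrite zerofE lmulE big1 // => S _; rewrite big1 // => T _; rewrite zerofE; case: ifP => // _; rewrite mulr0. Qed.
Lemma lmulNl a b : lmul (- a) b = - lmul a b.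
Proof. by apply/eqP; rewrite -subr_eq0 opprK -lmulDl addNr lmul0l. Qed.
Lemma lmulNr a b : lmul a (- b) = - lmul a b.
Proof. by apply/eqP; rewrite -subr_eq0 opprK -lmulDr addNr lmul0r. Qed.
Lemma lmulBl a b c : lmul (a - b) c = lmul a c - lmul b c.
Proof. by rewrite lmulDl lmulNl. Qed.
Lemma lmulBr a b c : lmul a (b - c) = lmul a b - lmul a c.
Proof. by rewrite lmulDr lmulNr. Qed.
Lemma lmul_suml I (r : seq I) P (F : I -> L) b :
  lmul (\sum_(i <- r | P i) F i) b = \sum_(i <- r | P i) lmul (F i) b.
Proof. by apply: (big_morph (fun a => lmul a b)) => [x y|]; rewrite ?lmulDl ?lmul0l. Qed.
Lemma lmul_sumr I (r : seq I) P (F : I -> L) a :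
  lmul a (\sum_(i <- r | P i) F i) = \sum_(i <- r | P i) lmul a (F i).
Proof. by apply: (big_morph (fun b => lmul a b)) => [x y|]; rewrite ?lmulDr ?lmul0r. Qed.
Lemma sc_sum I (r : seq I) P (F : I -> L) x :
  sc x (\sum_(i <- r | P i) F i) = \sum_(i <- r | P i) sc x (F i).
Proof.
apply: (big_morph (sc x)) => [a b|]; apply/ffunP => U;
  by rewrite ?scE ?addfE ?zerofE ?scE ?mulrDr ?mulr0.
Qed.
Lemma scD x (a b : L) : sc x (a + b) = sc x a + sc x b.
Proof. by apply/ffunP => U; rewrite !(scE, addfE) mulrDr. Qed.
Lemma scN x (a : L) : sc x (- a) = - sc x a.
Proof. by apply/ffunP => U; rewrite !(scE, oppfE) mulrN. Qed.
Lemma scM x y (a : L) : sc x (sc y a) = sc (x * y) a.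
Proof. by apply/ffunP => U; rewrite !scE mulrA. Qed.
Lemma sc1 (a : L) : sc 1 a = a.
Proof. by apply/ffunP => U; rewrite scE mul1r. Qed.
Lemma sc0 (a : L) : sc 0 a = 0.
Proof. by apply/ffunP => U; rewrite scE zerofE mul0r. Qed.
Lemma scr0 x : sc x (0 : L) = 0.
Proof. by apply/ffunP => U; rewrite scE zerofE mulr0. Qed.
Lemma scDl x y (a : L) : sc (x + y) a = sc x a + sc y a.
Proof. by apply/ffunP => U; rewrite !(scE, addfE) mulrDl. Qed.

End Ext.

Section Ext2.
Variable n : nat.
Local Notation L := (Lam n).
Local Notation G := (Gen n).
Implicit Types (a b c : L) (S T U : {set G}).

Definition ninv S T := #|[set p in setX S T | (enum_rank p.2 < enum_rank p.1)%N]|.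
Lemma sgnE S T : sgn S T = (-1) ^+ ninv S T.
Proof. by []. Qed.

Lemma ninv0l T : ninv set0 T = 0%N.
Proof. by apply/eqP; rewrite cards_eq0; apply/eqP/setP => p; rewrite !inE. Qed.
Lemma ninv0r T : ninv T set0 = 0%N.
Proof. by apply/eqP; rewrite cards_eq0; apply/eqP/setP => p; rewrite !inE andbF. Qed.

Lemma ninvUl A B T : A :&: B = set0 -> ninv (A :|: B) T = (ninv A T + ninv B T)%N.
Proof.
move=> dAB; rewrite /ninv.
have -> : [set p in setX (A :|: B) T | (enum_rank p.2 < enum_rank p.1)%N] =
  [set p in setX A T | (enum_rank p.2 < enum_rank p.1)%N] :|:
  [set p in setX B T | (enum_rank p.2 < enum_rank p.1)%N].
  by apply/setP => p; rewrite !inE !andb_orl.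
rewrite cardsU; set k := #|_ :&: _|.
suff -> : k = 0%N by rewrite subn0.
apply/eqP; rewrite cards_eq0; apply/eqP/setP => p; rewrite !inE.
apply/negP => /andP[/andP[/andP[pA _] _] /andP[/andP[pB _] _]].
by move/setP: dAB => /(_ p.1); rewrite !inE pA pB.
Qed.

Lemma ninvUr A B T : A :&: B = set0 -> ninv T (A :|: B) = (ninv T A + ninv T B)%N.
Proof.
move=> dAB; rewrite /ninv.
have -> : [set p in setX T (A :|: B) | (enum_rank p.2 < enum_rank p.1)%N] =
  [set p in setX T A | (enum_rank p.2 < enum_rank p.1)%N] :|:
  [set p in setX T B | (enum_rank p.2 < enum_rank p.1)%N].
  by apply/setP => p; rewrite !inE !andb_orr !andb_orl.
rewrite cardsU; set k := #|_ :&: _|.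
suff -> : k = 0%N by rewrite subn0.
apply/eqP; rewrite cards_eq0; apply/eqP/setP => p; rewrite !inE.
apply/negP => /andP[/andP[/andP[_ pA] _] /andP[/andP[_ pB] _]].
by move/setP: dAB => /(_ p.2); rewrite !inE pA pB.
Qed.

Lemma ninv_swap S T : S :&: T = set0 -> (ninv S T + ninv T S)%N = (#|S| * #|T|)%N.
Proof.
move=> dST; rewrite /ninv -cardsX.
have -> : #|[set p in setX T S | (enum_rank p.2 < enum_rank p.1)%N]| =
          #|[set p in setX S T | (enum_rank p.1 < enum_rank p.2)%N]|.
  have inj_sw : injective (fun p : G * G => (p.2, p.1)) by move=> [? ?] [? ?] [-> ->].
  rewrite -(card_imset _ inj_sw).
  apply: eq_card => p; apply/imsetP/idP.
    by case=> q; rewrite !inE => /andP[/andP[q1 q2] q3] ->; rewrite /= q1 q2 q3.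
  case: p => x y; rewrite !inE /= => /andP[/andP[x1 y1] xy]; exists (y, x) => //.
  by rewrite !inE /= x1 y1 xy.
set A := [set p in setX S T | _]; set B := [set p in setX S T | _].
rewrite -cardsUI.
have -> : #|A :&: B| = 0%N.
  apply/eqP; rewrite cards_eq0; apply/eqP/setP => p; rewrite !inE.
  apply/negP => /andP[/andP[_ h1] /andP[_ h2]].
  by move: (ltn_trans h1 h2); rewrite ltnn.
rewrite addn0; apply: eq_card => p; rewrite !inE; case: p => x y /=.
case xS: (x \in S); case yT: (y \in T) => //=.
rewrite -neq_ltn; apply/negP => /eqP /val_inj /enum_rank_inj exy.
by move/setP: dST => /(_ x); rewrite !inE xS -exy yT.
Qed.

Lemma sgn0l T : sgn set0 T = 1.
Proof. by rewrite sgnE ninv0l. Qed.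
Lemma sgn0r T : sgn T set0 = 1.
Proof. by rewrite sgnE ninv0r. Qed.
Lemma sgnUl A B T : A :&: B = set0 -> sgn (A :|: B) T = sgn A T * sgn B T.
Proof. by move=> d; rewrite !sgnE ninvUl // exprD. Qed.
Lemma sgnUr A B T : A :&: B = set0 -> sgn T (A :|: B) = sgn T A * sgn T B.
Proof. by move=> d; rewrite !sgnE ninvUr // exprD. Qed.
Lemma sgn_sq S T : sgn S T * sgn S T = 1.
Proof. by rewrite sgnE -exprD -signr_odd addnn odd_double. Qed.
End Ext2.

Section Ext3.
Variable n : nat.
Local Notation L := (Lam n).
Local Notation G := (Gen n).
Implicit Types (a b c : L) (S T U : {set G}).

Lemma sum_if_eq (F : {set G} -> rat) U :
  \sum_T (if T == U then F T else 0) = F U.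
Proof. by rewrite -big_mkcond big_pred1_eq. Qed.
Lemma sum_if_eq' (F : {set G} -> rat) U :
  \sum_T (if U == T then F T else 0) = F U.
Proof. by rewrite -(sum_if_eq F U); apply: eq_bigr => T _; rewrite eq_sym. Qed.

Lemma oneE U : Defs.one n U = (U == set0)%:R.
Proof. by rewrite /one basisE. Qed.

Lemma lmul1l a : lmul (Defs.one n) a = a.
Proof.
apply/ffunP => U; rewrite lmulE (bigD1 set0) //= [X in _ + X]big1 ?addr0 => [|S nS]; last first.
  by apply: big1 => T _; rewrite oneE (negbTE nS) mulr0 mul0r; case: ifP.
rewrite -[RHS](sum_if_eq a U); apply: eq_bigr => T _.
by rewrite set0I set0U eqxx /= sgn0l oneE eqxx mul1r mul1r.
Qed.

Lemma lmul1r a : lmul a (Defs.one n) = a.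
Proof.
apply/ffunP => U; rewrite lmulE -[RHS](sum_if_eq a U); apply: eq_bigr => S _.
rewrite (bigD1 set0) //= [X in _ + X]big1 ?addr0 => [|T nT]; last first.
  by rewrite oneE (negbTE nT) mulr0; case: ifP.
by rewrite setI0 setU0 eqxx /= sgn0r oneE eqxx mul1r mulr1.
Qed.

Lemma sum_swap4 (F : {set G} -> {set G} -> {set G} -> {set G} -> rat) :
  \sum_A \sum_B \sum_C \sum_D F A B C D = \sum_C \sum_D \sum_B \sum_A F A B C D.
Proof.
transitivity (\sum_A \sum_C \sum_D \sum_B F A B C D).
  apply: eq_bigr => A _; rewrite exchange_big; apply: eq_bigr => C _.
  by rewrite exchange_big.
rewrite exchange_big; apply: eq_bigr => C _.
rewrite exchange_big; apply: eq_bigr => D _.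
by rewrite exchange_big.
Qed.


Definition F3 a b c U S1 S2 T : rat :=
  if [&& S1 :&: S2 == set0, S1 :&: T == set0, S2 :&: T == set0 & S1 :|: S2 :|: T == U]
  then sgn S1 S2 * sgn S1 T * sgn S2 T * a S1 * b S2 * c T else 0.

Lemma lmulA_L a b c U : lmul (lmul a b) c U = \sum_S1 \sum_S2 \sum_T F3 a b c U S1 S2 T.
Proof.
rewrite lmulE.
transitivity (\sum_S' \sum_T \sum_S1 \sum_S2
  (if (S' :&: T == set0) && (S' :|: T == U) && ((S1 :&: S2 == set0) && (S1 :|: S2 == S'))
   then sgn S' T * sgn S1 S2 * a S1 * b S2 * c T else 0)).
  apply: eq_bigr => S' _; apply: eq_bigr => T _.
  case: ifP => h; last by rewrite big1 // => S1 _; rewrite big1 // => S2 _; rewrite andbC h andbF.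
  rewrite lmulE mulr_sumr mulr_suml; apply: eq_bigr => S1 _.
  rewrite mulr_sumr mulr_suml; apply: eq_bigr => S2 _.
  rewrite ?h /=; case: ifP => _; last by rewrite mulr0 mul0r.
  by ring.
rewrite sum_swap4; apply: eq_bigr => S1 _; apply: eq_bigr => S2 _; apply: eq_bigr => T _.
rewrite (eq_bigr (fun S' => if S1 :|: S2 == S' then (if (S' :&: T == set0) && (S' :|: T == U) && (S1 :&: S2 == set0)
   then sgn S' T * sgn S1 S2 * a S1 * b S2 * c T else 0) else 0)); last first.
  move=> S' _; case: (S1 :|: S2 =P S') => [<-|ne]; first by rewrite ?eqxx ?andbT.
  by case: ifP => // /and3P[].
rewrite sum_if_eq' /F3 setIUl setU_eq0.
case h12: (S1 :&: S2 == set0); case h1: (S1 :&: T == set0); case h2: (S2 :&: T == set0);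
  case hU: (S1 :|: S2 :|: T == U); rewrite /= ?andbF ?andbT //.
rewrite sgnUl; last exact/eqP.
by ring.
Qed.

Lemma lmulA_R a b c U : lmul a (lmul b c) U = \sum_S1 \sum_S2 \sum_T F3 a b c U S1 S2 T.
Proof.
rewrite lmulE.
transitivity (\sum_S1 \sum_T' \sum_S2 \sum_T
  (if (S1 :&: T' == set0) && (S1 :|: T' == U) && ((S2 :&: T == set0) && (S2 :|: T == T'))
   then sgn S1 T' * sgn S2 T * a S1 * b S2 * c T else 0)).
  apply: eq_bigr => S1 _; apply: eq_bigr => T' _.
  case: ifP => h; last by rewrite big1 // => S2 _; rewrite big1 // => T _; rewrite h.
  rewrite lmulE mulr_sumr; apply: eq_bigr => S2 _.
  rewrite mulr_sumr; apply: eq_bigr => T _.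
  rewrite ?h /=; case: ifP => _; last by rewrite mulr0.
  by ring.
apply: eq_bigr => S1 _.
rewrite exchange_big; apply: eq_bigr => S2 _.
rewrite exchange_big; apply: eq_bigr => T _.
rewrite (eq_bigr (fun T' => if S2 :|: T == T' then (if (S1 :&: T' == set0) && (S1 :|: T' == U) && (S2 :&: T == set0)
   then sgn S1 T' * sgn S2 T * a S1 * b S2 * c T else 0) else 0)); last first.
  move=> T' _; case: (S2 :|: T =P T') => [<-|ne]; first by rewrite ?eqxx ?andbT.
  by case: ifP => // /and3P[].
rewrite sum_if_eq' /F3 setIUr setU_eq0 setUA.
case h12: (S1 :&: S2 == set0); case h1: (S1 :&: T == set0); case h2: (S2 :&: T == set0);
  case hU: (S1 :|: S2 :|: T == U); rewrite /= ?andbF ?andbT //.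
rewrite sgnUr; last exact/eqP.
by ring.
Qed.

Lemma lmulA a b c : lmul (lmul a b) c = lmul a (lmul b c).
Proof. by apply/ffunP => U; rewrite lmulA_L lmulA_R. Qed.

End Ext3.

Section Ext4.
Variable n : nat.
Local Notation L := (Lam n).
Local Notation G := (Gen n).
Implicit Types (a b c u v : L) (S T U : {set G}).

Definition homog (p : nat) (u : L) := forall S, u S != 0 -> #|S| = p.

Lemma homog0 p : homog p 0.
Proof. by move=> S; rewrite zerofE eqxx. Qed.
Lemma homogD p u v : homog p u -> homog p v -> homog p (u + v).
Proof.
move=> hu hv S; rewrite addfE; case: (u S =P 0) => [->|/eqP]; first by rewrite add0r; exact: hv.
by move=> /hu.
Qed.
Lemma homogN p u : homog p u -> homog p (- u).
Proof. by move=> hu S; rewrite oppfE oppr_eq0; exact: hu. Qed.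
Lemma homogB p u v : homog p u -> homog p v -> homog p (u - v).
Proof. by move=> hu hv; apply: homogD => //; apply: homogN. Qed.
Lemma homogsc p x u : homog p u -> homog p (sc x u).
Proof. by move=> hu S; rewrite scE; case: (u S =P 0) => [->|/eqP /hu //]; rewrite mulr0 eqxx. Qed.
Lemma homog_gen g : homog 1 (gen g).
Proof. by move=> S; rewrite /gen basisE; case: (S =P [set g]) => [->|]; rewrite ?cards1 ?eqxx. Qed.
Lemma homog_one : homog 0 (Defs.one n).
Proof. by move=> S; rewrite oneE; case: (S =P set0) => [->|]; rewrite ?cards0 ?eqxx. Qed.
Lemma homog_sum I (r : seq I) (P : pred I) (F : I -> L) p :
  (forall i, P i -> homog p (F i)) -> homog p (\sum_(i <- r | P i) F i).
Proof.
move=> h; elim/big_rec: _ => [|i x Pi hx]; first exact: homog0.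
by apply: homogD => //; apply: h.
Qed.

Lemma homog_mul p q u v : homog p u -> homog q v -> homog (p + q) (lmul u v).
Proof.
move=> hu hv U; apply: contraNeq => hU; rewrite lmulE big1 // => S _; rewrite big1 // => T _.
case: ifP => // /andP[/eqP dST /eqP eU].
case: (u S =P 0) => [->|/eqP uS]; first by rewrite mulr0 mul0r.
case: (v T =P 0) => [->|/eqP vT]; first by rewrite mulr0.
move: hU; rewrite -eU cardsU dST cards0 subn0 (hu _ uS) (hv _ vT) eqxx.
by [].
Qed.

Lemma homogX i : homog 1 (X i). Proof. exact: homog_gen. Qed.
Lemma homogY i : homog 1 (Y i). Proof. exact: homog_gen. Qed.
Lemma homogW i j : homog 1 (W i j).
Proof. by rewrite /W; case: insub => [q|] /=; [exact: homog_gen | exact: homog0]. Qed.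

Lemma sgn_swap S T : S :&: T = set0 -> sgn S T = (-1) ^+ (#|S| * #|T|) * sgn T S.
Proof.
move=> d; have e : (-1) ^+ (ninv T S + ninv T S) = 1 :> rat.
  by rewrite addnn -signr_odd odd_double.
by rewrite -ninv_swap // exprD !sgnE -mulrA -exprD e mulr1.
Qed.

Lemma anticomm p q u v : homog p u -> homog q v ->
  lmul u v = sc ((-1) ^+ (p * q)) (lmul v u).
Proof.
move=> hu hv; apply/ffunP => U; rewrite scE !lmulE [in RHS]exchange_big mulr_sumr.
apply: eq_bigr => S _; rewrite mulr_sumr; apply: eq_bigr => T _.
rewrite setIC setUC; case: ifP => [/andP[/eqP d _]|]; last by rewrite mulr0.
case: (u S =P 0) => [->|/eqP uS]; first by rewrite !(mulr0, mul0r).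
case: (v T =P 0) => [->|/eqP vT]; first by rewrite !(mulr0, mul0r).
rewrite sgn_swap; last by rewrite setIC.
rewrite (hu _ uS) (hv _ vT) mulnC; ring.
Qed.

Lemma comm_odd u v : homog 1 u -> homog 1 v -> lmul u v = - lmul v u.
Proof. by move=> hu hv; rewrite (anticomm hu hv) expr1 sc_opp. Qed.

Lemma sq_odd u : homog 1 u -> lmul u u = 0.
Proof.
move=> hu; have := comm_odd hu hu; move: (lmul u u) => w hw.
apply/ffunP => U; rewrite zerofE; move/ffunP: hw => /(_ U); rewrite oppfE.
move=> h; have : w U *+ 2 = 0 by rewrite mulr2n {1}h addNr.
by move/eqP; rewrite mulrn_eq0 /= => /eqP.
Qed.

Lemma comm_even q u v : homog 2 u -> homog q v -> lmul u v = lmul v u.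
Proof.
move=> hu hv; rewrite (anticomm hu hv).
by rewrite -signr_odd oddM /= sc1.
Qed.

End Ext4.

Section Ext5.
Variable n : nat.
Local Notation L := (Lam n).
Local Notation G := (Gen n).
Implicit Types (a b c u v : L) (S T U : {set G}) (g h : G).

Lemma d2D u v : d2 (u + v) = d2 u + d2 v.
Proof. by rewrite /d2 -big_split /=; apply: eq_bigr => S _; rewrite addfE scDl. Qed.
Lemma d2_0 : d2 (0 : L) = 0.
Proof. by rewrite /d2 big1 // => S _; rewrite zerofE sc0. Qed.
Lemma d2N u : d2 (- u) = - d2 u.
Proof. by apply/eqP; rewrite -subr_eq0 opprK -d2D addNr d2_0. Qed.
Lemma d2B u v : d2 (u - v) = d2 u - d2 v.
Proof. by rewrite d2D d2N. Qed.
Lemma d2sc x u : d2 (sc x u) = sc x (d2 u).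
Proof. by rewrite /d2 sc_sum; apply: eq_bigr => S _; rewrite scE scM. Qed.
Lemma d2_sum I (r : seq I) (P : pred I) (F : I -> L) :
  d2 (\sum_(i <- r | P i) F i) = \sum_(i <- r | P i) d2 (F i).
Proof. by apply: big_morph; [exact: d2D | exact: d2_0]. Qed.
Lemma d2_basis S : d2 (basis_el S) = dbasis S.
Proof.
rewrite /d2 (bigD1 S) //= basisE eqxx sc1 big1 ?addr0 // => T nT.
by rewrite basisE (negbTE nT) sc0.
Qed.
Lemma decomp u : u = \sum_S sc (u S) (basis_el S).
Proof.
apply/ffunP => U; rewrite sum_ffunE (bigD1 U) //= scE basisE eqxx mulr1 big1 ?addr0 //.
by move=> S nS; rewrite scE basisE eq_sym (negbTE nS) mulr0.
Qed.
Lemma d2_one : d2 (Defs.one n) = 0.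
Proof. by rewrite /Defs.one d2_basis /dbasis big_set0. Qed.
Lemma dbasis1 g : dbasis [set g] = dgen g.
Proof.
rewrite /dbasis big_set1 setDv.
have -> : #|[set h in [set g] | (enum_rank h < enum_rank g)%N]| = 0%N.
  by apply/eqP; rewrite cards_eq0; apply/eqP/setP => h; rewrite !inE; case: eqP => // ->; rewrite ltnn.
by rewrite expr0 sc1 -/(Defs.one n) lmul1r.
Qed.
Lemma d2_gen g : d2 (gen g) = dgen g.
Proof. by rewrite d2_basis dbasis1. Qed.

End Ext5.

Section Ext6.
Variable n : nat.
Local Notation L := (Lam n).
Local Notation G := (Gen n).
Implicit Types (a b c u v : L) (S T U : {set G}) (g h : G).

Notation cnt T g := #|[set x in T | (enum_rank x < enum_rank g)%N]|.

Lemma ninv1 g T : ninv [set g] T = cnt T g.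
Proof.
have inj : injective (fun t : G => (g, t)) by move=> x y [].
rewrite /ninv.
transitivity #|(fun t : G => (g, t)) @: [set x in T | (enum_rank x < enum_rank g)%N]|; last exact: card_imset.
apply: eq_card => -[x y].
rewrite !inE /=; apply/idP/imsetP.
  by move=> /andP[/andP[/eqP -> yT] lt]; exists y => //; rewrite !inE yT.
by case=> t; rewrite !inE => /andP[tT lt] [-> ->]; rewrite eqxx tT lt.
Qed.

Lemma gen_basis g T : lmul (gen g) (basis_el T) =
  if g \in T then 0 else sc ((-1) ^+ cnt T g) (basis_el (g |: T)).
Proof.
apply/ffunP => U; rewrite lmulE (bigD1 [set g]) //= [X in _ + X]big1 ?addr0 => [|S nS]; last first.
  by apply: big1 => T' _; rewrite /gen basisE (negbTE nS) mulr0 mul0r; case: ifP.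
rewrite (bigD1 T) //= [X in _ + X]big1 ?addr0 => [|T' nT]; last first.
  by rewrite basisE (negbTE nT) mulr0; case: ifP.
rewrite /gen !basisE !eqxx !mulr1 setI_eq0 disjoints1.
case gT: (g \in T) => /=; first by rewrite zerofE.
rewrite scE basisE sgnE ninv1 eq_sym; case: (U == g |: T); by rewrite ?mulr1 ?mulr0.
Qed.

Lemma homog_dgen g : homog 2 (dgen g).
Proof.
rewrite /dgen; case: g => [g|q]; first exact: homog0.
apply: (homog_mul (p := 1) (q := 1)); apply: homogB.
- exact: homogX.
- exact: homogX.
- exact: homogY.
- exact: homogY.
Qed.

Lemma gen_dgen_comm g h w : lmul (gen g) (lmul (dgen h) w) = lmul (dgen h) (lmul (gen g) w).
Proof. by rewrite -lmulA -(comm_even (homog_dgen (g:=h)) (homog_gen (g:=g))) lmulA. Qed.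

Lemma sign_sq (m : nat) : (-1) ^+ m * (-1) ^+ m = 1 :> rat.
Proof. by rewrite -exprD addnn -signr_odd odd_double. Qed.

Lemma cnt_D1 T g h : h \in T -> cnt T g = ((enum_rank h < enum_rank g) + cnt (T :\ h) g)%N.
Proof.
move=> hT; rewrite (cardsD1 h) inE hT /=; congr (_ + _)%N.
by apply: eq_card => x; rewrite !inE andbA.
Qed.

Lemma cnt_U1 T g h : g \notin T -> cnt (g |: T) h = ((enum_rank g < enum_rank h) + cnt T h)%N.
Proof.
move=> gT; rewrite (cardsD1 g) !inE eqxx /=; congr (_ + _)%N.
apply: eq_card => x; rewrite !inE; case: eqP => [->|] //=.
by rewrite (negbTE gT).
Qed.

Lemma cnt_self T g : cnt (T :\ g) g = cnt T g.
Proof.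
apply: eq_card => x; rewrite !inE; case: eqP => [->|] //=.
by rewrite ltnn andbF.
Qed.

Lemma rank_tot g h : g != h -> ((enum_rank h < enum_rank g) + (enum_rank g < enum_rank h))%N = 1%N.
Proof.
move=> ne; case: (ltngtP (enum_rank h) (enum_rank g)) => //=.
by move/val_inj/enum_rank_inj => e; rewrite e eqxx in ne.
Qed.

Lemma leibniz_gen_basis g T :
  d2 (lmul (gen g) (basis_el T)) = lmul (dgen g) (basis_el T) - lmul (gen g) (dbasis T).
Proof.
rewrite gen_basis /dbasis lmul_sumr.
case gT: (g \in T).
  rewrite d2_0 (bigD1 g) //= big1 ?addr0 => [|h /andP[hT ng]]; last first.
    rewrite lmulscr gen_dgen_comm gen_basis.
    by rewrite !inE eq_sym ng gT lmul0r scr0.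
  rewrite lmulscr gen_dgen_comm gen_basis !inE eqxx /= lmulscr scM cnt_self sign_sq sc1.
  by rewrite setD1K // subrr.
rewrite d2sc d2_basis /dbasis big_setU1 /=; last by rewrite gT.
rewrite setU1K ?gT // cnt_U1 ?gT // ltnn add0n scD scM sign_sq sc1.
congr (_ + _); rewrite sc_sum -sumrN; apply: eq_bigr => h hT.
have ne : g != h by apply: contraFneq gT => ->.
rewrite lmulscr gen_dgen_comm gen_basis !inE ne gT /= lmulscr scM -scN.
rewrite -sc_opp scM.
have -> : (g |: T) :\ h = g |: (T :\ h).
  apply/setP => x; rewrite !inE; case: (x =P h) => [->|_] /=; last by [].
  by rewrite eq_sym (negbTE ne).
rewrite [in RHS]scM; apply: (congr1 (fun x => sc x _)).
rewrite cnt_U1 ?gT // (cnt_D1 g hT) !exprD.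
move: ((-1) ^+ #|[set x in T :\ h | (enum_rank x < enum_rank g)%N]|) => A.
move: ((-1) ^+ #|[set x in T | (enum_rank x < enum_rank h)%N]|) => B.
move: (rank_tot ne); case: (enum_rank h < enum_rank g)%N; case: (enum_rank g < enum_rank h)%N => // _.
  by rewrite expr0 expr1; ring.
by rewrite expr0 expr1; ring.
Qed.


Lemma scB x u v : sc x (u - v) = sc x u - sc x v.
Proof. by rewrite scD scN. Qed.

Lemma leibniz_gen g v : d2 (lmul (gen g) v) = lmul (dgen g) v - lmul (gen g) (d2 v).
Proof.
rewrite (decomp v) lmul_sumr !d2_sum !lmul_sumr -sumrB; apply: eq_bigr => S _.
by rewrite !lmulscr !d2sc leibniz_gen_basis d2_basis lmulscr scB.
Qed.

Lemma leibniz1 u v : homog 1 u -> d2 (lmul u v) = lmul (d2 u) v - lmul u (d2 v).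
Proof.
move=> hu; rewrite {1 2 3}(decomp u).
rewrite d2_sum lmul_suml lmul_suml lmul_suml d2_sum -sumrB.
apply: eq_bigr => S _.
case: (u S =P 0) => [->|/eqP uS]; first by rewrite !sc0 lmul0l d2_0 lmul0l lmul0l subrr.
have /eqP/cards1P[g ->] := hu _ uS.
by rewrite !lmulscl !d2sc -/(gen g) leibniz_gen d2_gen scB lmulscl.
Qed.

End Ext6.

Section Ext7.
Variable n : nat.
Local Notation L := (Lam n).
Local Notation G := (Gen n).
Implicit Types (a b c u v w : L) (S T U : {set G}) (g h : G).

Local Notation I := (@in_rel_ideal n).

Lemma I0 : I 0.
Proof.
exists 0%N, (fun _ => 0), (fun _ => 0), (fun _ => 0); split; first by case.
by rewrite big_ord0.
Qed.

Lemma ID u v : I u -> I v -> I (u + v).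
Proof.
move=> [m1 [a1 [r1 [b1 [hr1 ->]]]]] [m2 [a2 [r2 [b2 [hr2 ->]]]]].
exists (m1 + m2)%N.
exists (fun l => match split l with inl x => a1 x | inr y => a2 y end).
exists (fun l => match split l with inl x => r1 x | inr y => r2 y end).
exists (fun l => match split l with inl x => b1 x | inr y => b2 y end).
split; first by move=> l; case: (split l).
rewrite big_split_ord /=; congr (_ + _); apply: eq_bigr => l _.
  by rewrite (unsplitK (inl _)).
by rewrite (unsplitK (inr _)).
Qed.

Lemma IL w u : I u -> I (lmul w u).
Proof.
move=> [m [a [r [b [hr ->]]]]]; exists m, (fun l => lmul w (a l)), r, b; split => //.
by rewrite lmul_sumr; apply: eq_bigr => l _; rewrite !lmulA.
Qed.

Lemma IR w u : I u -> I (lmul u w).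
Proof.
move=> [m [a [r [b [hr ->]]]]]; exists m, a, r, (fun l => lmul (b l) w); split => //.
by rewrite lmul_suml; apply: eq_bigr => l _; rewrite !lmulA.
Qed.

Lemma Isc x u : I u -> I (sc x u).
Proof.
move=> [m [a [r [b [hr ->]]]]]; exists m, (fun l => sc x (a l)), r, b; split => //.
by rewrite sc_sum; apply: eq_bigr => l _; rewrite !lmulscl.
Qed.

Lemma IN u : I u -> I (- u).
Proof. by move=> h; rewrite -sc_opp; apply: Isc. Qed.

Lemma IB u v : I u -> I v -> I (u - v).
Proof. by move=> hu hv; apply: ID => //; apply: IN. Qed.

Lemma Isum J (r : seq J) (P : pred J) (F : J -> L) :
  (forall j, P j -> I (F j)) -> I (\sum_(j <- r | P j) F j).
Proof.
move=> h; elim/big_rec: _ => [|j x Pj hx]; first exact: I0.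
by apply: ID => //; apply: h.
Qed.

Lemma Irel r : is_rel r -> I r.
Proof.
move=> hr; exists 1%N, (fun _ => Defs.one n), (fun _ => r), (fun _ => Defs.one n); split => //.
by rewrite big_ord1 lmul1l lmul1r.
Qed.

End Ext7.

Section Ext8.
Variable n : nat.
Local Notation L := (Lam n).
Local Notation G := (Gen n).
Implicit Types (a b c u v w : L) (S T U : {set G}) (g h : G).
Local Notation I := (@in_rel_ideal n).

Lemma homog_d2 u : homog 1 u -> homog 2 (d2 u).
Proof.
move=> hu; rewrite /d2; apply: homog_sum => S _.
case: (u S =P 0) => [->|/eqP uS]; first by rewrite sc0; exact: homog0.
have /eqP/cards1P[g ->] := hu _ uS.
by apply: homogsc; rewrite dbasis1; exact: homog_dgen.
Qed.

Lemma d2_prod (J : eqType) (r : seq J) (P : pred J) (F : J -> L) :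
  (forall y, homog 1 (F y)) -> uniq r ->
  d2 (\big[@lmul n/Defs.one n]_(y <- r | P y) F y) =
  \sum_(x <- r | P x) sc ((-1) ^+ count P (take (index x r) r))
     (lmul (d2 (F x)) (\big[@lmul n/Defs.one n]_(y <- r | P y && (y != x)) F y)).
Proof.
move=> hF; elim: r => [|a r IH] /=; first by rewrite !big_nil d2_one.
case/andP=> ar ur; rewrite !big_cons.
have Er : \big[@lmul n/Defs.one n]_(y <- r | P y && (y != a)) F y =
          \big[@lmul n/Defs.one n]_(y <- r | P y) F y.
  rewrite -big_filter -[RHS]big_filter; congr (\big[_/_]_(y <- _) _).
  apply: eq_in_filter => y yr; case: eqP => [ya|]; last by rewrite andbT.
  by rewrite -ya yr in ar.
have Ei : forall x, x \in r -> (if a == x then 0%N else (index x r).+1) = (index x r).+1.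
  move=> x xr; rewrite ifN //; apply: contraNneq ar => ->; exact: xr.
case Pa: (P a).
  rewrite leibniz1 // IH // eqxx /= expr0 sc1 Er; congr (_ + _).
  rewrite lmul_sumr -sumrN [LHS]big_seq_cond [RHS]big_seq_cond; apply: eq_bigr => x /andP[xr Px].
  rewrite (Ei x xr) /= Pa /= exprS big_cons Pa /=.
  have -> : (a != x) by apply: contraNneq ar => ->.
  rewrite lmulscr -sc_opp scM; apply: (congr1 (sc _)).
  by rewrite -lmulA -(comm_even (homog_d2 (hF x)) (hF a)) lmulA.
rewrite IH // [LHS]big_seq_cond [RHS]big_seq_cond; apply: eq_bigr => x /andP[xr Px].
by rewrite (Ei x xr) /= Pa add0n big_cons Pa.
Qed.

Lemma I_prod (J : eqType) (r : seq J) (P : pred J) (F : J -> L) u x :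
  (forall y, homog 1 (F y)) -> homog 1 u -> x \in r -> P x -> I (lmul u (F x)) ->
  I (lmul u (\big[@lmul n/Defs.one n]_(y <- r | P y) F y)).
Proof.
move=> hF hu; elim: r => [|a r IH] //= xr Px hx; rewrite big_cons.
case: (x =P a) => [ea|/eqP nxa].
  by rewrite -ea Px -lmulA; apply: IR.
have xr' : x \in r by move: xr; rewrite inE (negbTE nxa).
case: (P a); last exact: IH.
rewrite -lmulA (comm_odd hu (hF a)) lmulNl lmulA; apply: IN; apply: IL; exact: IH.
Qed.

End Ext8.

Lemma count_iota2 (i j m : nat) : i != j ->
  (count (fun v => (v != i) && (v != j)) (iota 0 m) + (i < m) + (j < m))%N = m.
Proof.
move=> nij; elim: m => [|m IH] //.
rewrite -addn1 iotaD count_cat /= add0n addn0 addn1.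
by move: IH; case: (ltngtP i m) => [im|mi|<-]; case: (ltngtP j m) => [jm|mj|ej] //=; try lia.
Qed.

Lemma index_enum_ordE k : index_enum 'I_k = enum 'I_k.
Proof. by rewrite enumT /index_enum; case: index_enum_key. Qed.

Lemma count_take_ord k (i j m : 'I_k) : i != j ->
  (count (fun l : 'I_k => (l != i) && (l != j)) (take (index m (index_enum 'I_k)) (index_enum 'I_k))
     + (i < m) + (j < m))%N = m.
Proof.
move=> nij; rewrite index_enum_ordE index_enum_ord.
suff -> : count (fun l : 'I_k => (l != i) && (l != j)) (take m (enum 'I_k)) =
  count (fun v : nat => (v != i) && (v != j)) (iota 0 m) by exact: count_iota2.
have -> : iota 0 m = map val (take m (enum 'I_k)).
  by rewrite map_take val_enum_ord take_iota; congr iota; apply/esym/minn_idPl; exact: ltnW.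
by rewrite count_map.
Qed.
Section Regroup.
Variables (V : zmodType) (k : nat).
Implicit Types (F G : 'I_k -> 'I_k -> 'I_k -> V).

Lemma sum3D F G : \sum_(i < k) \sum_(j < k) \sum_(m < k) (F i j m + G i j m) =
  \sum_(i < k) \sum_(j < k) \sum_(m < k) F i j m + \sum_(i < k) \sum_(j < k) \sum_(m < k) G i j m.
Proof.
rewrite -big_split /=; apply: eq_bigr => i _; rewrite -big_split /=; apply: eq_bigr => j _.
by rewrite -big_split.
Qed.

Lemma regroup F :
  \sum_(i < k) \sum_(j < k | (i < j)%N) \sum_(m < k | (m != i) && (m != j)) F i j m =
  \sum_(p < k) \sum_(q < k | (p < q)%N) \sum_(r < k | (q < r)%N) (F p q r + F p r q + F q r p).
Proof.
transitivity (\sum_(i < k) \sum_(j < k) \sum_(m < k)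
   ((if (i < j < m)%N then F i j m else 0) + (if (i < m < j)%N then F i j m else 0)
    + (if (m < i < j)%N then F i j m else 0))).
  apply: eq_bigr => i _; rewrite big_mkcond; apply: eq_bigr => j _.
  rewrite big_mkcond /=.
  case: ifP => ij; last first.
    rewrite big1 // => m _.
    case h2: (i < m < j)%N; first by exfalso; move: ij h2; lia.
    by rewrite ?andbF /= ?addr0.
  apply: eq_bigr => m _.
  have -> : (m != i) && (m != j) = (nat_of_ord m != nat_of_ord i) && (nat_of_ord m != nat_of_ord j) by [].
  case h1: (j < m)%N; case h2: (i < m < j)%N; case h3: (m < i)%N;
  case h0: ((nat_of_ord m != nat_of_ord i) && (nat_of_ord m != nat_of_ord j)); rewrite /= ?addr0 ?add0r //; exfalso; lia.
rewrite !sum3D.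
transitivity (\sum_(p < k) \sum_(q < k) \sum_(r < k)
   ((if (p < q < r)%N then F p q r else 0) + (if (p < q < r)%N then F p r q else 0)
    + (if (p < q < r)%N then F q r p else 0))); last first.
  apply: eq_bigr => p _; rewrite [RHS]big_mkcond; apply: eq_bigr => q _.
  case: ifP => pq; last by rewrite big1 // => r _; rewrite /= !addr0.
  rewrite [RHS]big_mkcond; apply: eq_bigr => r _; rewrite /=.
  by case: (q < r)%N; rewrite ?addr0.
rewrite !sum3D; congr (_ + _ + _).
  apply: eq_bigr => i _; rewrite exchange_big; apply: eq_bigr => m _; apply: eq_bigr => j _.
  by [].
transitivity (\sum_(i < k) \sum_(m < k) \sum_(j < k) (if (m < i < j)%N then F i j m else 0)).
  by apply: eq_bigr => i _; rewrite exchange_big.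
by rewrite exchange_big.
Qed.
End Regroup.

Section Bracket.
Variable n : nat.
Local Notation L := (Lam n).

Lemma zmod_id (V : zmodType) (t1 t2 t3 t4 : V) :
  t2 - t4 + - t3 = (0 + t1 + t2) - (t3 + t4 + t1).
Proof.
rewrite add0r !opprD !addrA [t1 + t2]addrC -[t2 + t1 - t3]addrA [t1 - t3]addrC !addrA.
rewrite -[t2 - t3 + t1 - t4]addrA [t1 - t4]addrC !addrA addrK.
by rewrite -addrA [- t4 - t3]addrC addrA.
Qed.

Lemma bracket_id (al be ga al' be' ga' Om : L) :
  homog 1 al -> homog 1 be -> homog 1 ga ->
  lmul al (lmul (lmul ga ga') Om) - lmul al (lmul (lmul be be') Om)
    + lmul be (lmul (lmul al al') Om)
  = lmul al (lmul (al + be + ga) (lmul ga' Om)) - lmul al (lmul be (lmul (al' + be' + ga') Om)).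
Proof.
move=> ha hb hg.
rewrite !lmulDl !lmulDr !lmulA.
have -> : lmul al (lmul al (lmul ga' Om)) = 0 by rewrite -lmulA sq_odd // lmul0l.
have -> : lmul be (lmul al (lmul al' Om)) = - lmul al (lmul be (lmul al' Om)).
  by rewrite -lmulA (comm_odd hb ha) lmulNl lmulA.
exact: zmod_id.
Qed.
End Bracket.

Section Circ.
Variables (n k : nat) (om f g : 'I_k -> Lam n).
Local Notation L := (Lam n).
Local Notation I := (@in_rel_ideal n).
Hypotheses (hom_om : forall l, homog 1 (om l)) (hom_f : forall l, homog 1 (f l))
  (hom_g : forall l, homog 1 (g l))
  (sum_f : \sum_(l < k) f l = 0) (sum_g : \sum_(l < k) g l = 0)
  (If : forall l, I (lmul (f l) (om l))) (Ig : forall l, I (lmul (g l) (om l)))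
  (d_om : forall l, d2 (om l) = lmul (f l) (g l)) (d_f : forall l, d2 (f l) = 0).

Definition Om (P : pred 'I_k) := \big[@lmul n/Defs.one n]_(l < k | P l) om l.

Lemma I_Om (h : 'I_k -> L) (P : pred 'I_k) m :
  (forall l, homog 1 (h l)) -> (forall l, I (lmul (h l) (om l))) -> P m ->
  I (lmul (h m) (Om P)).
Proof.
move=> hh Ih Pm; apply: (I_prod (x := m)) => //; exact: mem_index_enum.
Qed.

Lemma sum3 (h : 'I_k -> L) (p q r : 'I_k) : p != q -> q != r -> p != r ->
  \sum_(l < k) h l = h p + h q + h r + \sum_(l < k | [&& l != p, l != q & l != r]) h l.
Proof.
move=> pq qr pr.
rewrite (bigD1 p) //= (bigD1 q) /=; last by rewrite eq_sym pq.
rewrite (bigD1 r) /=; last by rewrite eq_sym pr eq_sym qr.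
rewrite !addrA; congr (_ + _); apply: eq_bigl => l.
by rewrite andbA.
Qed.

Lemma bracket (p q r : 'I_k) : p != q -> q != r -> p != r ->
  let Oo := Om (fun l => [&& l != p, l != q & l != r]) in
  I (lmul (f p) (lmul (lmul (f r) (g r)) Oo) - lmul (f p) (lmul (lmul (f q) (g q)) Oo)
     + lmul (f q) (lmul (lmul (f p) (g p)) Oo)).
Proof.
move=> pq qr pr Oo.
rewrite bracket_id //.
set Rf := \sum_(l < k | [&& l != p, l != q & l != r]) f l.
set Rg := \sum_(l < k | [&& l != p, l != q & l != r]) g l.
have ef : f p + f q + f r = - Rf.
  by apply/eqP; rewrite -subr_eq0 opprK -(sum3 f pq qr pr) sum_f.
have eg : g p + g q + g r = - Rg.
  by apply/eqP; rewrite -subr_eq0 opprK -(sum3 g pq qr pr) sum_g.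
have hRf : homog 1 Rf by apply: homog_sum => l _.
have IRf : I (lmul Rf Oo).
  rewrite /Rf lmul_suml; apply: Isum => l Pl; exact: I_Om.
have IRg : I (lmul Rg Oo).
  rewrite /Rg lmul_suml; apply: Isum => l Pl; exact: I_Om.
rewrite ef eg; apply: IB.
  rewrite lmulNl lmulNr; apply: IN; apply: IL.
  by rewrite -lmulA (comm_odd hRf (@hom_g r)) lmulNl lmulA; apply: IN; apply: IL.
by rewrite lmulNl !lmulNr; apply: IN; apply: IL; apply: IL.
Qed.


Lemma Om_ext (P Q : pred 'I_k) : P =1 Q -> Om P = Om Q.
Proof. by move=> e; apply: eq_bigl. Qed.

Definition cntP (i j m : 'I_k) :=
  count (fun l : 'I_k => (l != i) && (l != j)) (take (index m (index_enum 'I_k)) (index_enum 'I_k)).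

Lemma sgn_cnt (i j m : 'I_k) : i != j ->
  (-1) ^+ cntP i j m = (-1) ^+ (m + (i < m)%N + (j < m)%N) :> rat.
Proof.
move=> nij; have h := count_take_ord m nij.
rewrite -signr_odd -[RHS]signr_odd; congr ((-1) ^+ (nat_of_bool _)).
rewrite -{1}h /cntP !oddD !oddb.
by case: (odd _); case: (i < m)%N; case: (j < m)%N.
Qed.

Definition Lgen := \sum_(i < k) \sum_(j < k | (i < j)%N)
  sc ((-1) ^+ (i + j)) (lmul (f i) (Om (fun l => (l != i) && (l != j)))).

Definition Fm (i j m : 'I_k) : L :=
  sc (- (-1) ^+ (i + j) * (-1) ^+ cntP i j m)
     (lmul (f i) (lmul (lmul (f m) (g m)) (Om (fun l => ((l != i) && (l != j)) && (l != m))))).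

Lemma d2_Lgen : d2 Lgen =
  \sum_(i < k) \sum_(j < k | (i < j)%N) \sum_(m < k | (m != i) && (m != j)) Fm i j m.
Proof.
rewrite /Lgen d2_sum; apply: eq_bigr => i _; rewrite d2_sum; apply: eq_bigr => j _.
rewrite d2sc leibniz1 // d_f lmul0l sub0r /Om d2_prod //; last exact: index_enum_uniq.
rewrite lmul_sumr -sumrN sc_sum; apply: eq_bigr => m _.
by rewrite lmulscr d_om -sc_opp !scM /Fm; congr (sc _ _); rewrite /cntP; ring.
Qed.

Lemma I_d2_Lgen : I (d2 Lgen).
Proof.
rewrite d2_Lgen regroup; apply: Isum => p _; apply: Isum => q pq; apply: Isum => r qr.
have pr : (p < r)%N by exact: ltn_trans qr.
have npq : p != q by rewrite -val_eqE /= neq_ltn pq.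
have nqr : q != r by rewrite -val_eqE /= neq_ltn qr.
have npr : p != r by rewrite -val_eqE /= neq_ltn pr.
have := bracket npq nqr npr => /= hb.
set Oo := Om (fun l => [&& l != p, l != q & l != r]) in hb.
have e1 : Om (fun l => ((l != p) && (l != q)) && (l != r)) = Oo.
  by apply: Om_ext => l; rewrite andbA.
have e2 : Om (fun l => ((l != p) && (l != r)) && (l != q)) = Oo.
  by apply: Om_ext => l; rewrite -andbA [(l != r) && _]andbC andbA.
have e3 : Om (fun l => ((l != q) && (l != r)) && (l != p)) = Oo.
  by apply: Om_ext => l; rewrite andbC andbA.
rewrite /Fm e1 e2 e3 !sgn_cnt // ?(eq_sym r) ?(eq_sym q) //.
rewrite pr qr pq ltnNge (ltnW qr) ltnNge (ltnW pq) ltnNge (ltnW pr) /=.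
set X1 := lmul (f p) _ in hb *; set X2 := lmul (f p) _ in hb *; set X3 := lmul (f q) _ in hb *.
set e := (-1) ^+ p * (-1) ^+ q * (-1) ^+ r : rat.
suff -> : sc (- (-1) ^+ (p + q) * (-1) ^+ (r + 1 + 1)) X1 +
     sc (- (-1) ^+ (p + r) * (-1) ^+ (q + 1 + 0)) X2 +
     sc (- (-1) ^+ (q + r) * (-1) ^+ (p + 0 + 0)) X3 = sc (- e) (X1 - X2 + X3).
  exact: Isc.
apply/ffunP => U; rewrite !(addfE, scE, oppfE) /e !exprD expr1 expr0.
move: ((-1) ^+ p : rat) ((-1) ^+ q : rat) ((-1) ^+ r : rat) => a b c.
ring.
Qed.
End Circ.

Section Final.
Variable n : nat.
Local Notation L := (Lam n).
Local Notation I := (@in_rel_ideal n).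

Lemma d2X (i : 'I_n) : d2 (X i) = 0.
Proof. by rewrite /X d2_gen. Qed.
Lemma d2Y (i : 'I_n) : d2 (Y i) = 0.
Proof. by rewrite /Y d2_gen. Qed.

Lemma d2W (i j : 'I_n) : i != j -> d2 (W i j) = lmul (X i - X j) (Y i - Y j).
Proof.
move=> nij; rewrite /W; case: ltngtP => h.
- by rewrite insubT /= d2_gen.
- rewrite insubT /= d2_gen /= -[X j - X i]opprB -[Y j - Y i]opprB.
  by rewrite lmulNl lmulNr opprK.
- by move/val_inj: h => e; rewrite e eqxx in nij.
Qed.

Lemma IX (i j : 'I_n) : i != j -> I (lmul (X j - X i) (W i j)).
Proof.
move=> nij; rewrite -opprB lmulNl; apply: IN; apply: Irel.
by left; exists i, j.
Qed.
Lemma IY (i j : 'I_n) : i != j -> I (lmul (Y j - Y i) (W i j)).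
Proof.
move=> nij; rewrite -opprB lmulNl; apply: IN; apply: Irel.
by right; left; exists i, j.
Qed.

Lemma sum_circ k (c : 'I_k -> 'I_n * 'I_n) (h : 'I_n -> L) :
  (forall m, (c m).2 = (c (ordS m)).1) -> \sum_(l < k) (h (c l).2 - h (c l).1) = 0.
Proof.
move=> hc; rewrite sumrB.
rewrite (eq_bigr (fun l => h (c (ordS l)).1)); last by move=> l _; rewrite hc.
by rewrite [X in _ - X](reindex_inj (@ordS_inj k)) subrr.
Qed.

End Final.

Theorem theorem2p5 (n k : nat) (c : 'I_k -> 'I_n * 'I_n) :
  (3 <= n)%N -> is_circuit c ->
  in_rel_ideal (d2 (L_C c)) /\ in_rel_ideal (d2 (L'_C c)).
Proof.
move=> _ [k3 hne hc hinj].
have hX : forall l, homog 1 (X (c l).2 - X (c l).1).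
  by move=> l; apply: homogB; apply: homogX.
have hY : forall l, homog 1 (Y (c l).2 - Y (c l).1).
  by move=> l; apply: homogB; apply: homogY.
have hW : forall l, homog 1 (omega_edge (c l)) by move=> l; apply: homogW.
have dW : forall l, d2 (omega_edge (c l)) = lmul (X (c l).2 - X (c l).1) (Y (c l).2 - Y (c l).1).
  move=> l; rewrite /omega_edge d2W ?hne // -[X (c l).2 - _]opprB -[Y (c l).2 - _]opprB.
  by rewrite lmulNl lmulNr opprK.
have dX : forall l, d2 (X (c l).2 - X (c l).1) = 0 by move=> l; rewrite d2B !d2X subrr.
have dY : forall l, d2 (Y (c l).2 - Y (c l).1) = 0 by move=> l; rewrite d2B !d2Y subrr.
have IXl : forall l, in_rel_ideal (lmul (X (c l).2 - X (c l).1) (omega_edge (c l))).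
  by move=> l; apply: IX.
have IYl : forall l, in_rel_ideal (lmul (Y (c l).2 - Y (c l).1) (omega_edge (c l))).
  by move=> l; apply: IY.
split.
- have -> : L_C c = Lgen (fun l => omega_edge (c l)) (fun l => X (c l).2 - X (c l).1) by [].
  apply: (I_d2_Lgen (g := fun l => Y (c l).2 - Y (c l).1)) => //.
  + exact: sum_circ.
  + exact: sum_circ.
- have -> : L'_C c = Lgen (fun l => omega_edge (c l)) (fun l => Y (c l).2 - Y (c l).1) by [].
  apply: (I_d2_Lgen (g := fun l => - (X (c l).2 - X (c l).1))) => //.
  + by move=> l; apply: homogN.
  + exact: sum_circ.
  + by rewrite sumrN sum_circ ?oppr0.
  + by move=> l; rewrite lmulNl; apply: IN.
  + by move=> l; rewrite dW lmulNr (comm_odd (hX l) (hY l)).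
Qed.
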